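(* Let $P$ be a poset such that $\Sigma P\times\Sigma P$ is a Fréchet space. If either (1) $P$ is compact in its Lawson topology, or (2) $\Sigma P$ is well-filtered and coherent, then $\Sigma P$ is sober.
   Context: For a poset $P$, $\Sigma P$ denotes $P$ with the Scott topology (a set $U$ is Scott open iff $U$ is an upper set and for every directed $D$ with existing supremum, $\bigvee D\in U$ implies $D\cap U\neq\emptyset$). The Lawson topology on $P$ is the topology generated by the Scott open sets together with the sets $P\setminus\uparrow x$, $x\in P$. A topological space is Fréchet if whenever $x$ lies in the closure of a set $A$, some sequence in $A$ converges to $x$. A subset of a space is saturated if it is an upper set in the specialization order ($x\le y$ iff $x\in\overline{\{y\}}$). A space is well-filtered if for every filtered family $\mathcal F$ of compact saturated subsets and every open $U$, $\bigcap\mathcal F\subseteq U$ implies $F\subseteq U$ for some $F\in\mathcal F$. A space is coherent if the intersection of any two compact saturated subsets is compact. A $T_0$ space is sober if every irreducible closed set equals $\overline{\{x\}}$ for some point $x$. *)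

(* Defs.v *)
(* Sets are predicates [X -> Prop];
   a topology on a type X is given by its predicate of open sets. *)
From Stdlib Require Import List.

Definition set (X : Type) := X -> Prop.

Definition is_poset {T : Type} (le : T -> T -> Prop) : Prop :=
  (forall x, le x x) /\
  (forall x y, le x y -> le y x -> x = y) /\
  (forall x y z, le x y -> le y z -> le x z).

Definition upper_set {T : Type} (le : T -> T -> Prop) (U : set T) : Prop :=
  forall x y, U x -> le x y -> U y.

Definition directed {T : Type} (le : T -> T -> Prop) (D : set T) : Prop :=
  (exists d, D d) /\
  (forall x y, D x -> D y -> exists z, D z /\ le x z /\ le y z).

Definition is_sup {T : Type} (le : T -> T -> Prop) (D : set T) (s : T) : Prop :=
  (forall d, D d -> le d s) /\
  (forall u, (forall d, D d -> le d u) -> le s u).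

Definition scott_open {T : Type} (le : T -> T -> Prop) (U : set T) : Prop :=
  upper_set le U /\
  (forall (D : set T) (s : T), directed le D -> is_sup le D s -> U s ->
     exists d, D d /\ U d).

(* Topology generated by a subbasis [S]: U is open iff every point of U lies
   in a finite intersection of subbasic sets contained in U
   (the empty intersection being the whole space). *)
Definition generated_open {X : Type} (S : set (set X)) (U : set X) : Prop :=
  forall x, U x ->
    exists l : list (set X),
      (forall B, In B l -> S B) /\
      (forall B, In B l -> B x) /\
      (forall y, (forall B, In B l -> B y) -> U y).

Definition lawson_subbasis {T : Type} (le : T -> T -> Prop) : set (set T) :=
  fun B => scott_open le B \/ exists x, forall y, B y <-> ~ le x y.

Definition lawson_open {T : Type} (le : T -> T -> Prop) : set (set T) :=
  generated_open (lawson_subbasis le).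

Definition product_open {X Y : Type} (OX : set (set X)) (OY : set (set Y))
  (W : set (X * Y)) : Prop :=
  forall p, W p ->
    exists U V, OX U /\ OY V /\ U (fst p) /\ V (snd p) /\
      (forall a b, U a -> V b -> W (a, b)).

Section Top.
Context {X : Type} (O : set (set X)).

Definition closed (C : set X) : Prop := O (fun x => ~ C x).

Definition closure (A : set X) : set X :=
  fun x => forall U, O U -> U x -> exists a, A a /\ U a.

Definition converges (s : nat -> X) (x : X) : Prop :=
  forall U, O U -> U x -> exists N, forall n, N <= n -> U (s n).

Definition frechet : Prop :=
  forall (A : set X) (x : X), closure A x ->
    exists s : nat -> X, (forall n, A (s n)) /\ converges s x.

Definition compact (K : set X) : Prop :=
  forall (I : Type) (F : I -> set X),
    (forall i, O (F i)) ->
    (forall x, K x -> exists i, F i x) ->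
    exists l : list I, forall x, K x -> exists i, In i l /\ F i x.

Definition spec_le (x y : X) : Prop := closure (fun z => z = y) x.

Definition saturated (A : set X) : Prop :=
  forall x y, A x -> spec_le x y -> A y.

Definition compact_saturated (K : set X) : Prop := compact K /\ saturated K.

Definition well_filtered : Prop :=
  forall (F : set (set X)) (U : set X),
    (exists K, F K) ->
    (forall K, F K -> compact_saturated K) ->
    (forall K1 K2, F K1 -> F K2 ->
       exists K3, F K3 /\ (forall x, K3 x -> K1 x /\ K2 x)) ->
    O U ->
    (forall x, (forall K, F K -> K x) -> U x) ->
    exists K, F K /\ (forall x, K x -> U x).

Definition coherent : Prop :=
  forall K1 K2, compact_saturated K1 -> compact_saturated K2 ->
    compact (fun x => K1 x /\ K2 x).

Definition T0 : Prop :=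
  forall x y, x <> y ->
    exists U, O U /\ ~ (U x <-> U y).

Definition irreducible (A : set X) : Prop :=
  (exists a, A a) /\
  forall B C, closed B -> closed C ->
    (forall x, A x -> B x \/ C x) ->
    (forall x, A x -> B x) \/ (forall x, A x -> C x).

Definition sober : Prop :=
  T0 /\
  forall A, closed A -> irreducible A ->
    exists x, forall z, A z <-> closure (fun w => w = x) z.

End Top.

(* Main.v *)
Require Import Defs.
From Stdlib Require Import List Classical Lia Arith.

Section S.
Variable T : Type.
Variable le : T -> T -> Prop.
Hypothesis Hpo : is_poset le.

Lemma lrefl x : le x x.
Proof. destruct Hpo as [H _]; apply H. Qed.
Lemma ltrans x y z : le x y -> le y z -> le x z.
Proof. destruct Hpo as [_ [_ H]]; eauto. Qed.
Lemma lanti x y : le x y -> le y x -> x = y.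
Proof. destruct Hpo as [_ [H _]]; eauto. Qed.

Notation O := (scott_open le).

Lemma scott_open_ext U V : O U -> (forall x, U x <-> V x) -> O V.
Proof.
  intros [Hu Hd] He. split.
  - intros x y Vx Hle. apply He. apply (Hu x y); auto. apply He; auto.
  - intros D s HD Hs Vs. destruct (Hd D s HD Hs) as [d [Dd Ud]]. apply He; auto.
    exists d; split; auto. apply He; auto.
Qed.

Lemma open_True : O (fun _ => True).
Proof. split.
  - intros x y _ _; exact I.
  - intros D s HD _ _. destruct HD as [[d Dd] _]. exists d; auto. Qed.

Lemma notle_open x : O (fun y => ~ le y x).
Proof.
  split.
  - intros y y' Hn Hle H. apply Hn. eapply ltrans; eauto.
  - intros D s HD [Hub Hl] Hns. apply NNPP; intro Hn. apply Hns. apply Hl.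
    intros d Dd. apply NNPP; intro H. apply Hn. exists d; auto.
Qed.

Lemma open_upper U x y : O U -> U x -> le x y -> U y.
Proof. intros [H _] Ux Hle. eapply H; eauto. Qed.

Lemma closed_lower A x y : closed O A -> A y -> le x y -> A x.
Proof.
  intros HA Ay Hle. apply NNPP; intro Hn. apply (open_upper _ x y HA Hn Hle Ay).
Qed.

Lemma cl_single x z : closure O (fun w => w = x) z <-> le z x.
Proof.
  split.
  - intro H. apply NNPP; intro Hn. destruct (H _ (notle_open x) Hn) as [a [-> Ha]].
    apply Ha. apply lrefl.
  - intros Hle U HU Uz. exists x. split; auto. eapply open_upper; eauto.
Qed.

Lemma upper_saturated K : upper_set le K -> saturated O K.
Proof.
  intros HK x y Kx Hs. unfold spec_le in Hs. apply cl_single in Hs. eapply HK; eauto.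
Qed.

Lemma T0_scott : T0 O.
Proof.
  intros x y Hxy. destruct (classic (le x y)) as [H|H].
  - exists (fun w => ~ le w x). split. apply notle_open. intros [H1 H2].
    assert (H0 : ~ le y x) by (intro; apply Hxy; apply lanti; auto).
    apply (H2 H0). apply lrefl.
  - exists (fun w => ~ le w y). split. apply notle_open. intros [H1 H2].
    apply (H1 H). apply lrefl.
Qed.

Lemma irr_seq A a b :
  frechet (product_open O O) -> closed O A -> irreducible O A -> A a -> A b ->
  exists z : nat -> T, (forall n, A (z n)) /\ converges O z a /\ converges O z b.
Proof.
  intros Hfr HA [_ Hirr] Aa Ab.
  destruct (Hfr (fun p => A (fst p) /\ snd p = fst p) (a, b)) as [s [Hs Hc]].
  - intros W HW Wab. destruct (HW (a,b) Wab) as [U [V [HU [HV [Ua [Vb Hsub]]]]]].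
    simpl in *. assert (exists c, A c /\ U c /\ V c) as [c [Ac [Uc Vc]]].
    { apply NNPP; intro Hn.
      destruct (Hirr (fun x => ~ U x) (fun x => ~ V x)) as [H|H].
      - unfold closed. apply scott_open_ext with U; auto. intro; split; intro; auto.
        apply NNPP; auto.
      - unfold closed. apply scott_open_ext with V; auto. intro; split; intro; auto.
        apply NNPP; auto.
      - intros x Ax. destruct (classic (U x)); [|left; auto].
        destruct (classic (V x)); [|right; auto]. exfalso; apply Hn; eauto.
      - apply (H a Aa Ua).
      - apply (H b Ab Vb). }
    exists (c, c). split. simpl; auto. apply Hsub; auto.
  - exists (fun n => fst (s n)). split; [intro n; apply (Hs n)|split].
    + intros U HU Ua. destruct (Hc (fun p => U (fst p))) as [N HN].
      * intros p Up. exists U, (fun _ => True).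
        refine (conj HU (conj open_True (conj Up (conj I _)))). intros; auto.
      * simpl; auto.
      * exists N; auto.
    + intros V HV Vb. destruct (Hc (fun p => V (snd p))) as [N HN].
      * intros p Vp. exists (fun _ => True), V.
        refine (conj open_True (conj HV (conj I (conj Vp _)))). intros; auto.
      * simpl; auto.
      * exists N. intros n Hn. rewrite <- (proj2 (Hs n)). apply HN; auto.
Qed.

Lemma tail_compact z a N : converges O z a ->
  compact O (fun x => le a x \/ exists n, N <= n /\ le (z n) x).
Proof.
  intros Hc I F HF Hcov.
  destruct (Hcov a (or_introl (lrefl a))) as [i0 Hi0].
  destruct (Hc (F i0) (HF i0) Hi0) as [M HM].
  assert (Hfin : forall k, exists l : list I, forall n, N <= n < N + k ->
             exists i, In i l /\ F i (z n)).
  { induction k.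
    - exists nil. intros; lia.
    - destruct IHk as [l Hl].
      destruct (Hcov (z (N + k))) as [i Hi].
      { right. exists (N + k). split; [lia|apply lrefl]. }
      exists (i :: l). intros n Hn. destruct (Nat.eq_dec n (N + k)).
      + subst. exists i; simpl; auto.
      + destruct (Hl n) as [j [Hj1 Hj2]]; [lia|]. exists j; simpl; auto. }
  destruct (Hfin M) as [l Hl]. exists (i0 :: l).
  intros x [Hax | [n [Hn Hzx]]].
  - exists i0; split; [left; reflexivity|]. eapply open_upper; eauto.
  - destruct (le_lt_dec M n).
    + exists i0; split; [left; reflexivity|]. apply (open_upper _ (z n) x); [apply HF| apply HM; lia | exact Hzx].
    + destruct (Hl n) as [j [Hj1 Hj2]]; [lia|]. exists j; split; [right; auto|].
      apply (open_upper _ (z n) x); [apply HF| exact Hj2 | exact Hzx].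
Qed.

Lemma up_compact a : compact O (fun x => le a x).
Proof.
  intros I F HF Hcov. destruct (Hcov a (lrefl a)) as [i Hi].
  exists (i :: nil). intros x Hx. exists i. split; [left; auto|]. eapply open_upper; eauto.
Qed.

Definition KL (z : nat -> T) a b N : set T := fun x =>
  (le a x \/ exists n, N <= n /\ le (z n) x) /\ (le b x \/ exists n, N <= n /\ le (z n) x).

Lemma KL_mono z a b N1 N2 x : N1 <= N2 -> KL z a b N2 x -> KL z a b N1 x.
Proof.
  intros Hle [[H1|[n [Hn H1]]] [H2|[m [Hm H2]]]]; split;
    solve [left; auto | right; exists n; split; [lia|auto] | right; exists m; split; [lia|auto]].
Qed.

Lemma limit_below z a w : converges O z a ->
  (forall N, le a w \/ exists n, N <= n /\ le (z n) w) -> le a w.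
Proof.
  intros Hc H. apply NNPP; intro Haw.
  destruct (Hc _ (notle_open w) Haw) as [M HM].
  destruct (H M) as [H'|[n [Hn H']]]; [contradiction|]. apply (HM n Hn H').
Qed.

Lemma pair_wf (Hwf : well_filtered O) (Hcoh : coherent O) A (HA : closed O A)
  z a b (Hz : forall n, A (z n)) (Ha : converges O z a) (Hb : converges O z b) :
  exists w, A w /\ le a w /\ le b w.
Proof.
  assert (exists w, A w /\ forall N, KL z a b N w) as [w [Aw Hw]].
  { apply NNPP; intro Hn.
    destruct (Hwf (fun S => exists N, S = KL z a b N) (fun x => ~ A x)) as [K [[N ->] HK]].
    - exists (KL z a b 0), 0; reflexivity.
    - intros K [N ->]. split.
      + exact (Hcoh _ _ (conj (tail_compact z a N Ha) (upper_saturated _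
           (fun x y H Hle => match H with
                             | or_introl H1 => or_introl (ltrans _ _ _ H1 Hle)
                             | or_intror (ex_intro _ n (conj Hn H1)) =>
                                 or_intror (ex_intro _ n (conj Hn (ltrans _ _ _ H1 Hle)))
                             end)))
           (conj (tail_compact z b N Hb) (upper_saturated _
           (fun x y H Hle => match H with
                             | or_introl H1 => or_introl (ltrans _ _ _ H1 Hle)
                             | or_intror (ex_intro _ n (conj Hn H1)) =>
                                 or_intror (ex_intro _ n (conj Hn (ltrans _ _ _ H1 Hle)))
                             end)))).
      + apply upper_saturated. intros x y [[H1|[n [Hn0 H1]]] [H2|[m [Hm H2]]]] Hle; split;
          solve [left; eapply ltrans; eauto | right; eexists; split; eauto; eapply ltrans; eauto].
    - intros K1 K2 [N1 ->] [N2 ->]. exists (KL z a b (max N1 N2)). split.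
      + exists (max N1 N2); reflexivity.
      + intros x Hx. split; [apply (KL_mono z a b N1 (max N1 N2)) | apply (KL_mono z a b N2 (max N1 N2))]; auto; lia.
    - exact HA.
    - intros x Hx Ax. apply Hn. exists x. split; auto. intro N. apply Hx. exists N; reflexivity.
    - apply (HK (z N)); [|apply Hz]. split; right; exists N; split; auto; apply lrefl. }
  exists w. split; auto. split.
  - apply (limit_below z a w Ha). intro N. apply (Hw N).
  - apply (limit_below z b w Hb). intro N. apply (Hw N).
Qed.

Lemma top_wf (Hwf : well_filtered O) A (HA : closed O A) (Hne : exists a, A a)
  (Hdir : forall a b, A a -> A b -> exists w, A w /\ le a w /\ le b w) :
  exists w, A w /\ forall a, A a -> le a w.
Proof.
  apply NNPP; intro Hn.
  destruct (Hwf (fun S => exists a, A a /\ S = (fun x => le a x)) (fun x => ~ A x))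
    as [K [[a [Aa ->]] HK]].
  - destruct Hne as [a Aa]. exists (fun x => le a x). exists a; auto.
  - intros K [a [_ ->]]. split; [apply up_compact|]. apply upper_saturated.
    intros x y H1 H2; eapply ltrans; eauto.
  - intros K1 K2 [a1 [A1 ->]] [a2 [A2 ->]]. destruct (Hdir a1 a2 A1 A2) as [w [Aw [H1 H2]]].
    exists (fun x => le w x). split. exists w; auto.
    intros x Hx; split; eapply ltrans; eauto.
  - exact HA.
  - intros x Hx Ax. apply Hn. exists x; split; auto. intros a Aa.
    apply (Hx (fun y => le a y)). exists a; auto.
  - apply (HK a (lrefl a) Aa).
Qed.

Definition Comp (A : set T) x y := exists w, A w /\ le x w /\ le y w.

Lemma comp_sym A x y : Comp A x y -> Comp A y x.
Proof. intros [w [Aw [H1 H2]]]; exists w; auto. Qed.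

Lemma comp_down A x y y' : Comp A x y' -> le y y' -> Comp A x y.
Proof. intros [w [Aw [H1 H2]]] Hle; exists w; repeat split; auto. eapply ltrans; eauto. Qed.

Lemma fip (HL : compact (lawson_open le) (fun _ => True)) A (HA : closed O A) x
  (D : set T) (Hne : exists d, D d)
  (Hdir : forall d1 d2, D d1 -> D d2 -> exists d3, D d3 /\ le d1 d3 /\ le d2 d3)
  (Hc : forall d, D d -> Comp A x d) :
  exists w, A w /\ le x w /\ forall d, D d -> le d w.
Proof.
  apply NNPP; intro Hn.
  destruct (HL T (fun d => fun y => D d /\ (~ le d y \/ ~ le x y \/ ~ A y))) as [l Hl].
  - intros d y [Dd Hy].
    destruct Hy as [H|[H|H]].
    + exists ((fun y => ~ le d y) :: nil). split; [|split].
      * intros B [<-|[]]. right. exists d. intro; reflexivity.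
      * intros B [<-|[]]; auto.
      * intros y' Hy'. split; auto. left. apply (Hy' _ (or_introl eq_refl)).
    + exists ((fun y => ~ le x y) :: nil). split; [|split].
      * intros B [<-|[]]. right. exists x. intro; reflexivity.
      * intros B [<-|[]]; auto.
      * intros y' Hy'. split; auto. right; left. apply (Hy' _ (or_introl eq_refl)).
    + exists ((fun y => ~ A y) :: nil). split; [|split].
      * intros B [<-|[]]. left. exact HA.
      * intros B [<-|[]]; auto.
      * intros y' Hy'. split; auto. right; right. apply (Hy' _ (or_introl eq_refl)).
  - intros y _. destruct Hne as [d0 Dd0]. apply NNPP; intro Hno. apply Hn.
    exists y. split; [|split].
    + apply NNPP; intro H. apply Hno. exists d0. split; auto.
    + apply NNPP; intro H. apply Hno. exists d0. split; auto.
    + intros d Dd. apply NNPP; intro H. apply Hno. exists d. split; auto.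
  - assert (Hub : forall l : list T, exists ds, D ds /\ forall d, In d l -> D d -> le d ds).
    { induction l0 as [|d l0 IH].
      - destruct Hne as [d0 Dd0]. exists d0. split; auto. intros d [].
      - destruct IH as [d' [Dd' Hd']]. destruct (classic (D d)) as [Dd|nDd].
        + destruct (Hdir d d' Dd Dd') as [d3 [D3 [H1 H2]]]. exists d3. split; auto.
          intros e [<-|He] De; auto. eapply ltrans; eauto.
        + exists d'. split; auto. intros e [<-|He] De; [contradiction|auto]. }
    destruct (Hub l) as [ds [Dds Hds]].
    destruct (Hc ds Dds) as [w [Aw [Hxw Hdw]]].
    destruct (Hl w I) as [d [Hin [Dd Hf]]].
    destruct Hf as [H|[H|H]]; apply H; auto.
    eapply ltrans; [apply Hds; auto|auto].
Qed.

Lemma comp_closed (HL : compact (lawson_open le) (fun _ => True)) A (HA : closed O A) x :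
  closed O (fun y => Comp A x y).
Proof.
  unfold closed. split.
  - intros y y' Hny Hle Hc'. apply Hny. eapply comp_down; eauto.
  - intros D s [Hne Hdir] [Hub Hl] Hns. apply NNPP; intro Hn. apply Hns.
    destruct (fip HL A HA x D Hne Hdir) as [w [Aw [Hxw Hdw]]].
    { intros d Dd. apply NNPP; intro Hc. apply Hn; exists d; auto. }
    exists w; repeat split; auto.
Qed.

Lemma conv_closed z a (C : set T) : converges O z a -> closed O C ->
  (exists N, forall n, N <= n -> C (z n)) -> C a.
Proof.
  intros Hc HC [N HN]. apply NNPP; intro H.
  destruct (Hc _ HC H) as [M HM]. apply (HM (max N M)); [lia|]. apply HN; lia.
Qed.

Lemma inf_comp (HL : compact (lawson_open le) (fun _ => True)) A (HA : closed O A) z a d :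
  converges O z a -> (forall M, exists n, M <= n /\ Comp A (z n) d) -> Comp A a d.
Proof.
  intros Hc Hinf. apply NNPP; intro H.
  destruct (Hc (fun y => ~ Comp A d y) (comp_closed HL A HA d)) as [M HM].
  { intro H'; apply H; apply comp_sym; auto. }
  destruct (Hinf M) as [n [Hn Hcn]]. apply (HM n Hn). apply comp_sym; auto.
Qed.

Lemma pair_lawson (HL : compact (lawson_open le) (fun _ => True)) A (HA : closed O A)
  z a b (Hz : forall n, A (z n)) (Ha : converges O z a) (Hb : converges O z b) :
  Comp A a b.
Proof.
  apply NNPP; intro H0.
  destruct (Ha (fun y => ~ Comp A b y) (comp_closed HL A HA b)) as [N HN].
  { intro H; apply H0; apply comp_sym; auto. }
  set (C := fun y => Comp A a y \/ exists n, N <= n /\ Comp A (z n) y).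
  assert (HC : closed O C).
  { unfold closed. split.
    - intros y y' Hny Hle HCy'. apply Hny. destruct HCy' as [H|[n [Hn H]]].
      + left; eapply comp_down; eauto.
      + right; exists n; split; auto; eapply comp_down; eauto.
    - intros D s [Hne Hdir] [Hsub Hl] Hns. apply NNPP; intro Hall.
      assert (HD : forall d, D d -> C d).
      { intros d Dd; apply NNPP; intro; apply Hall; exists d; auto. }
      apply Hns.
      destruct (classic (forall d, D d -> exists d', D d' /\ le d d' /\ Comp A a d'))
        as [HA1|HA1].
      + left. destruct (fip HL A HA a D Hne Hdir) as [w [Aw [Haw Hdw]]].
        { intros d Dd. destruct (HA1 d Dd) as [d' [Dd' [Hle Hc]]]. eapply comp_down; eauto. }
        exists w; repeat split; auto.
      + apply not_all_ex_not in HA1. destruct HA1 as [d0 Hd0].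
        assert (Dd0 : D d0) by (apply NNPP; intro; apply Hd0; intro; contradiction).
        assert (Hna : forall d', D d' -> le d0 d' -> ~ Comp A a d').
        { intros d' Dd' Hle Hc. apply Hd0. intros _. exists d'; auto. }
        set (D' := fun d => D d /\ le d0 d).
        assert (Hdir' : forall d1 d2, D' d1 -> D' d2 ->
                  exists d3, D' d3 /\ le d1 d3 /\ le d2 d3).
        { intros d1 d2 [D1 H1] [D2 H2]. destruct (Hdir d1 d2 D1 D2) as [d3 [D3 [H3 H4]]].
          exists d3. split; auto. split; auto. eapply ltrans; eauto. }
        assert (exists n, N <= n /\ forall d, D' d -> Comp A (z n) d) as [n [Hn Hcomp]].
        { apply NNPP; intro Hno.
          assert (Hno' : forall n, N <= n -> exists d, D' d /\ ~ Comp A (z n) d).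
          { intros n Hn. apply NNPP; intro H. apply Hno. exists n. split; auto.
            intros d Dd. apply NNPP; intro H'. apply H. exists d; auto. }
          assert (exists M, forall n, M <= n -> ~ Comp A (z n) d0) as [M HM].
          { apply NNPP; intro H. apply (Hna d0 Dd0 (lrefl d0)).
            apply (inf_comp HL A HA z a d0 Ha). intro M. apply NNPP; intro H'.
            apply H. exists M. intros n Hn Hc. apply H'. exists n; auto. }
          assert (Hk : forall k, exists ds, D' ds /\
                     forall n, N <= n < N + k -> ~ Comp A (z n) ds).
          { induction k.
            - exists d0. split. split; auto; apply lrefl. intros; lia.
            - destruct IHk as [ds [Dds Hds]].
              destruct (Hno' (N + k)) as [dk [Ddk Hdk]]; [lia|].
              destruct (Hdir' ds dk Dds Ddk) as [d3 [D3 [H1 H2]]].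
              exists d3. split; auto. intros n' Hn' Hc.
              destruct (Nat.eq_dec n' (N + k)).
              + subst. apply Hdk. eapply comp_down; eauto.
              + apply (Hds n'); [lia|]. eapply comp_down; eauto. }
          destruct (Hk M) as [ds [[Dds Hd0s] Hds]].
          destruct (HD ds Dds) as [H|[n' [Hn' Hc]]].
          - apply (Hna ds Dds Hd0s H).
          - destruct (le_lt_dec M n').
            + apply (HM n' l). eapply comp_down; eauto.
            + apply (Hds n'); [lia|auto]. }
        right. exists n. split; auto.
        destruct (fip HL A HA (z n) D') as [w [Aw [Hzw Hdw]]].
        { exists d0. split; auto. apply lrefl. }
        { exact Hdir'. }
        { exact Hcomp. }
        exists w. repeat split; auto. apply Hl. intros d Dd.
        destruct (Hdir d d0 Dd Dd0) as [d3 [D3 [H1 H2]]].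
        eapply ltrans; [exact H1|]. apply Hdw. split; auto. }
  assert (Cb : C b).
  { apply (conv_closed z b C Hb HC). exists N. intros n Hn. right. exists n. split; auto.
    exists (z n). repeat split; auto; apply lrefl. }
  destruct Cb as [H|[n [Hn Hc]]].
  - apply H0; auto.
  - apply (HN n Hn). apply comp_sym; auto.
Qed.

Lemma sober_of (H : forall A, closed O A -> irreducible O A ->
                      exists w, A w /\ forall a, A a -> le a w) : sober O.
Proof.
  split. apply T0_scott. intros A HA Hirr. destruct (H A HA Hirr) as [w [Aw Hw]].
  exists w. intro z. rewrite cl_single. split; auto. intro Hzw. eapply closed_lower; eauto.
Qed.

End S.

Theorem corollary3p7 (T : Type) (le : T -> T -> Prop) (Hpo : is_poset le) :
  frechet (product_open (scott_open le) (scott_open le)) ->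
  (compact (lawson_open le) (fun _ => True) \/
   (well_filtered (scott_open le) /\ coherent (scott_open le))) ->
  sober (scott_open le).
Proof.
  intros Hfr Hcase. apply (sober_of T le Hpo). intros A HA Hirr.
  assert (pair : forall a b, A a -> A b -> exists w, A w /\ le a w /\ le b w).
  { intros a b Aa Ab. destruct (@irr_seq T le A a b Hfr HA Hirr Aa Ab) as [z [Hz [Ha Hb]]].
    destruct Hcase as [HL | [Hwf Hcoh]].
    - exact (pair_lawson T le Hpo HL A HA z a b Hz Ha Hb).
    - exact (pair_wf T le Hpo Hwf Hcoh A HA z a b Hz Ha Hb). }
  destruct Hcase as [HL | [Hwf Hcoh]].
  - destruct Hirr as [[a0 Aa0] _].
    destruct (fip T le Hpo HL A HA a0 A (ex_intro _ a0 Aa0)) as [w [Aw [_ Hw]]].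
    + intros d1 d2 D1 D2. destruct (pair d1 d2 D1 D2) as [w [Aw [H1 H2]]]. exists w; auto.
    + intros d Dd. destruct (pair a0 d Aa0 Dd) as [w [Aw [H1 H2]]]. exists w; auto.
    + exists w; auto.
  - apply (top_wf T le Hpo Hwf A HA); auto. destruct Hirr as [H _]; exact H.
Qed.
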